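(* Let $A\in\mathsf{M}_n(\mathbb{C})$ be nonsingular and $h$-cyclic, and let $P=\{V_1,\dots,V_h\}$ be a partition of $\{1,\dots,n\}$ describing the $h$-cyclic structure of $A$. Then $|V_i|=|V_j|$ for all $i,j\in\{1,\dots,h\}$.
   Context: The digraph $\Gamma_A$ of $A=[a_{ij}]\in\mathsf{M}_n(\mathbb{C})$ has vertex set $\{1,\dots,n\}$ and arc set $\{(i,j): a_{ij}\neq 0\}$. A digraph with vertex set $V$ and arc set $E$ is cyclically $h$-partite with partition $P=\{V_1,\dots,V_h\}$ of $V$ (into $h$ nonempty parts) if for every arc $(i,j)\in E$ there is $\ell\in\{1,\dots,h\}$ with $i\in V_\ell$ and $j\in V_{\ell+1}$, where $V_{h+1}:=V_1$. The matrix $A$ is $h$-cyclic with partition $P$ (equivalently, $P$ describes the $h$-cyclic structure of $A$) if $\Gamma_A$ is cyclically $h$-partite with partition $P$; i.e., $a_{ij}\neq 0$ implies $i\in V_\ell$, $j\in V_{\ell+1}$ for some $\ell$. *)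

(* Defs.v *)
From mathcomp Require Import all_boot all_order all_algebra.
From mathcomp Require Import reals.
From mathcomp Require Import complex.
Set Implicit Arguments. Unset Strict Implicit. Unset Printing Implicit Defensive.
Import GRing.Theory Num.Theory.
Local Open Scope ring_scope.

(* An ordered partition P = (V_1,...,V_h) of {1..n} (here {0..n-1}) into h
   nonempty parts, indexed by 'I_h (V_0,...,V_{h-1}). *)
Definition is_ordered_partition (n h : nat) (V : 'I_h -> {set 'I_n}) : Prop :=
  (forall k, V k != set0) /\
  (forall k l, k != l -> [disjoint V k & V l]) /\
  (forall i : 'I_n, exists k, i \in V k).

Definition cyclic_with_partition (F : nzRingType) (n h : nat) (A : 'M[F]_n)
    (V : 'I_h -> {set 'I_n}) : Prop :=
  is_ordered_partition V /\
  forall i j : 'I_n, A i j != 0 ->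
    exists l : 'I_h, exists l' : 'I_h,
      (nat_of_ord l' = (l.+1 %% h)%N) /\ i \in V l /\ j \in V l'.

(* Main.v *)
Require Import Defs.
From mathcomp Require Import all_boot all_order all_algebra.
From mathcomp Require Import reals complex.
Set Implicit Arguments. Unset Strict Implicit. Unset Printing Implicit Defensive.
Import GRing.Theory Num.Theory.
Local Open Scope ring_scope.

Lemma supp_card (F : fieldType) n (A : 'M[F]_n) (S T : {set 'I_n}) :
  A \in unitmx -> (forall i c, i \in S -> A i c != 0 -> c \in T) ->
  (#|S| <= #|T|)%N.
Proof.
move=> Au supp.
pose P : 'M[F]_(#|S|, n) := \matrix_(i, r) (enum_val i == r)%:R.
pose B1 : 'M[F]_(#|S|, #|T|) := \matrix_(i, j) A (enum_val i) (enum_val j).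
pose C : 'M[F]_(#|T|, n) := \matrix_(j, c) (enum_val j == c)%:R.
have E : P *m A = B1 *m C.
  apply/matrixP => i c; rewrite !mxE.
  rewrite (bigD1 (enum_val i)) //= big1 ?addr0; last first.
    by move=> r /negbTE hr; rewrite mxE eq_sym hr mul0r.
  rewrite mxE eqxx mul1r.
  have Si : enum_val i \in S := enum_valP i.
  case: (boolP (c \in T)) => cT.
    rewrite (bigD1 (enum_rank_in cT c)) //= big1 ?addr0.
      by rewrite !mxE enum_rankK_in // eqxx mulr1.
    move=> j hj; rewrite !mxE.
    case: eqP => [ej|]; last by rewrite mulr0.
    by case/eqP: hj; apply: enum_val_inj; rewrite enum_rankK_in.
  have -> : A (enum_val i) c = 0.
    by apply/eqP; apply: contraNT cT => /(supp _ _ Si).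
  by rewrite big1 // => j _; rewrite !mxE; case: eqP => [ej|]; [rewrite -ej enum_valP in cT|rewrite mulr0].
have rP : \rank P = #|S|.
  apply/eqP; rewrite eqn_leq rank_leq_row /=.
  have H : P *m P^T = 1%:M.
    apply/matrixP => i j; rewrite !mxE.
    rewrite (bigD1 (enum_val i)) //= big1 ?addr0.
      rewrite !mxE eqxx mul1r; congr (_%:R); rewrite (inj_eq enum_val_inj) eq_sym; done.
    by move=> r /negbTE hr; rewrite !mxE eq_sym hr mul0r.
  by have := mxrankM_maxl P P^T; rewrite H mxrank1.
have : \rank (P *m A) = #|S| by rewrite mxrankMfree ?row_free_unit.
rewrite E => <-.
exact: leq_trans (mxrankM_maxl _ _) (rank_leq_col _).
Qed.

Theorem theorem3p1 (R : realType) (n h : nat) (A : 'M[R[i]]_n)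
    (V : 'I_h -> {set 'I_n}) :
  (0 < h)%N ->
  A \in unitmx ->
  cyclic_with_partition A V ->
  forall k l : 'I_h, #|V k| = #|V l|.
Proof.
move=> h0 Au [[_ [disj _]] cyc].
have step : forall l : 'I_h, (#|V l| <= #|V (ordS l)|)%N.
  move=> l; apply: supp_card Au _ => i c il /cyc [m [m' [em [im cm]]]].
  have ml : m = l.
    case: (eqVneq m l) => // ne.
    by rewrite (disjointFr (disj _ _ ne) im) in il.
  subst m.
  suff -> : ordS l = m' by [].
  by apply: val_inj; rewrite /= em.
have eqs : forall l : 'I_h, #|V l| = #|V (ordS l)|.
  move=> l; apply/eqP; rewrite eqn_leq step /=.
  have Hs : (\sum_(k < h) #|V (ordS k)| = \sum_(k < h) #|V k|)%N.
    by rewrite [RHS](reindex_inj (@ordS_inj h)).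
  apply: contraT; rewrite -ltnNge => lt.
  have : (\sum_(k < h) #|V k| < \sum_(k < h) #|V (ordS k)|)%N.
    rewrite (bigD1 l) //= [X in (_ < X)%N](bigD1 l) //=.
    by rewrite -addSn leq_add // leq_sum.
  by rewrite Hs ltnn.
pose z : 'I_h := Ordinal h0.
suff H : forall k : 'I_h, #|V k| = #|V z| by move=> k l; rewrite !H.
case=> m; elim: m => [|m IH] hm.
  by congr (#|V _|); apply: val_inj.
have hm' : (m < h)%N by apply: ltnW.
have E : Ordinal hm = ordS (Ordinal hm').
  by apply: val_inj; rewrite /= modn_small.
rewrite E -(eqs (Ordinal hm')). exact: IH.
Qed.
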